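(* Let $D=(D_1,D_2)$ with $D_1\in\mathcal{U}(n,s_1\cdots s_p)$ and $D_2\in\mathcal{U}(n,s_{p+1}\cdots s_{p+q})$, and assume $s_{p+1},\dots,s_t$ are odd and $s_{t+1},\dots,s_{p+q}$ are even, where $p\le t\le p+q$. Then $\mathrm{QQD}^2(D)\ge \mathrm{LB}_1$, where \begin{align*}\mathrm{LB}_1=&\;C+\frac1n\left(\frac32\right)^{p+q}+\frac{n-1}{n}\left(\frac54\right)^p\left(\frac65\right)^{\sum_{k=1}^p\frac{n-s_k}{s_k(n-1)}}\left(\frac32\right)^{\sum_{k=p+1}^{p+q}\frac{n-s_k}{s_k(n-1)}}\left(\frac54\right)^{\sum_{k=t+1}^{p+q}\frac{n}{s_k(n-1)}}\\&\times\prod_{k=p+1}^{t}\prod_{i=1}^{(s_k-1)/2}\left(\frac32-\frac{2i(2s_k-2i)}{4s_k^2}\right)^{\frac{2n}{s_k(n-1)}}\prod_{k=t+1}^{p+q}\prod_{i=1}^{(s_k/2)-1}\left(\frac32-\frac{2i(2s_k-2i)}{4s_k^2}\right)^{\frac{2n}{s_k(n-1)}},\end{align*} and $C=-\prod_{k=1}^{p}\left(\frac{5s_k+1}{4s_k}\right)\left(\frac43\right)^q$.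
   Context: A U-type design in $\mathcal{U}(n,s_1\cdots s_m)$ is an $n\times m$ matrix whose $k$th column takes each value in $\{0,\dots,s_k-1\}$ equally often. $D=(D_1,D_2)$ has $p$ qualitative columns ($D_1$) followed by $q$ quantitative columns ($D_2$). For quantitative columns a level $x$ is transformed to $(2x+1)/(2s_k)\in[0,1]$. Let $\chi=\prod_k\chi_k$, $\chi_k=\{0,\dots,s_k-1\}$ for $k\le p$, $\chi_k=[0,1]$ for $k>p$, and $F$ the uniform distribution on $\chi$. Kernel: $\mathcal{K}(t,z)=\prod_k\mathcal{K}_k(t_k,z_k)$ with $\mathcal{K}_k=(3/2)^{\delta_{t_kz_k}}(5/4)^{1-\delta_{t_kz_k}}$ for $k\le p$ ($\delta$ the Kronecker delta) and $\mathcal{K}_k=\frac32-|t_k-z_k|+|t_k-z_k|^2$ for $k>p$. For $D$ with (transformed) rows $x_1,\dots,x_n$, the squared qualitative-quantitative discrepancy is $\mathrm{QQD}^2(D)=\int_{\chi^2}\mathcal{K}\,dF\,dF-\frac2n\sum_i\int_\chi\mathcal{K}(t,x_i)dF(t)+\frac1{n^2}\sum_{i,j}\mathcal{K}(x_i,x_j)$. Empty sums are $0$ and empty products are $1$. *)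

(* Defs.v *)
From HB Require Import structures.
From mathcomp Require Import all_boot all_order all_algebra.
From mathcomp Require Import all_classical all_reals all_analysis.
Set Implicit Arguments. Unset Strict Implicit. Unset Printing Implicit Defensive.
Import Order.TTheory GRing.Theory Num.Theory.
Import numFieldNormedType.Exports.
Local Open Scope classical_set_scope.
Local Open Scope ring_scope.

(* Columns are indexed 0 .. p+q-1 (0-based); column k is qualitative iff k < p.
   s k is the number of levels of column k. *)

Definition Utype (n m : nat) (s : nat -> nat) (D : 'M[nat]_(n, m)) : Prop :=
  forall k : 'I_m,
    (forall i : 'I_n, (D i k < s k)%N) /\
    (forall v w : nat, (v < s k)%N -> (w < s k)%N ->
        #|[set i : 'I_n | D i k == v]| = #|[set i : 'I_n | D i k == w]|).

Section QQD.
Variable R : realType.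
Variables (p q : nat) (s : nat -> nat).

Definition Kk (k : nat) (a b : R) : R :=
  if (k < p)%N then (if a == b then 3/2 else 5/4)
  else 3/2 - `|a - b| + `|a - b| ^+ 2.

Definition Kern (t z : nat -> R) : R := \prod_(k < p + q) Kk k (t k) (z k).

Definition avg (k : nat) (f : R -> R) : R :=
  if (k < p)%N then (s k)%:R^-1 * \sum_(x < s k) f x%:R
  else \int[@lebesgue_measure R]_(x in `[0, 1]) f x.

Definition upd (t : nat -> R) (j : nat) (x : R) : nat -> R :=
  fun i => if i == j then x else t i.

Fixpoint iterint (k : nat) (g : (nat -> R) -> R) (t : nat -> R) : R :=
  match k with
  | 0 => g t
  | k'.+1 => avg k' (fun x => iterint k' g (upd t k' x))
  end.

(* integral of g over chi with respect to F (product of the uniform laws,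
   computed as an iterated integral) *)
Definition intF (g : (nat -> R) -> R) : R := iterint (p + q) g (fun _ => 0).

Definition xpt n (D : 'M[nat]_(n, p + q)) (i : 'I_n) : nat -> R :=
  fun k => match insub k with
           | Some k' => if (k < p)%N then (D i k')%:R
                        else ((D i k')%:R *+ 2 + 1) / ((s k)%:R *+ 2)
           | None => 0
           end.

Definition QQD2 n (D : 'M[nat]_(n, p + q)) : R :=
  intF (fun t => intF (fun z => Kern t z))
  - 2 / n%:R * \sum_(i < n) intF (fun t => Kern t (xpt D i))
  + 1 / (n%:R ^+ 2) * \sum_(i < n) \sum_(j < n) Kern (xpt D i) (xpt D j).

End QQD.

(* Main.v *)
Require Import Defs.
From HB Require Import structures.
From mathcomp Require Import all_boot all_order all_algebra.
From mathcomp Require Import all_classical all_reals all_analysis.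
From mathcomp Require Import ring lra zify.
Set Implicit Arguments. Unset Strict Implicit. Unset Printing Implicit Defensive.
Import Order.TTheory GRing.Theory Num.Theory.
Import numFieldNormedType.Exports.
Local Open Scope classical_set_scope.
Local Open Scope ring_scope.

Section Int.
Variable R : realType.
Implicit Types x y z u h : R.

Lemma absq_bound u h : `| (u + h) * `|u + h| - u * `|u| - 2 * `|u| * h | <= h ^+ 2.
Proof.
have [u0|u0] := lerP 0 u; have [uh0|uh0] := lerP 0 (u + h).
- rewrite (ger0_norm u0) (ger0_norm uh0).
  have -> : (u + h) * (u + h) - u * u - 2 * u * h = h ^+ 2 by ring.
  by rewrite ger0_norm ?sqr_ge0.
- rewrite (ger0_norm u0) (ltr0_norm uh0); rewrite ler_norml; apply/andP; split; nra.
- rewrite (ltr0_norm u0) (ger0_norm uh0); rewrite ler_norml; apply/andP; split; nra.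
- rewrite (ltr0_norm u0) (ltr0_norm uh0).
  have -> : (u + h) * - (u + h) - u * - u - 2 * - u * h = - h ^+ 2 by ring.
  by rewrite normrN ger0_norm ?sqr_ge0.
Qed.

Lemma is_derive_absq z x :
  is_derive x 1 (fun y => (y - z) * `|y - z|) (2 * `|x - z|).
Proof.
set B := fun y => _.
have H : (fun h => h^-1 *: ((B \o shift x) (h *: 1) - B x)) @ 0^' --> 2 * `|x - z|.
{
  apply/cvgrPdist_le => e e0.
  near=> h.
  have hne : h != 0 by near: h; exact: nbhs_dnbhs_neq.
  rewrite /B /= [h%:A]mulr1.
  have -> : h + x - z = (x - z) + h by ring.
  rewrite -[h^-1 *: _]/(h^-1 * _).
  set u := x - z.
  have -> : 2 * `|u| - h^-1 * ((u + h) * `|u + h| - u * `|u|)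
      = - h^-1 * ((u + h) * `|u + h| - u * `|u| - 2 * `|u| * h).
    by field.
  rewrite normrM normrN normrV ?unitfE // ler_pdivrMl ?normr_gt0 //.
  apply: (le_trans (absq_bound u h)).
  rewrite -real_normK ?num_real // expr2 ler_wpM2l //.
  by near: h; exact: dnbhs0_le.
Unshelve. all: by end_near. }
apply: DeriveDef; first by apply/cvg_ex; exists (2 * `|x - z|).
by rewrite /derive; apply: cvg_lim.
Qed.

Definition Kq (x z : R) : R := 3/2 - `|x - z| + `|x - z| ^+ 2.

Lemma Kq_cont z : continuous (fun x => Kq x z).
Proof.
move=> x; rewrite /Kq.
have -> : (fun x0 : R => 3 / 2 - `|x0 - z| + `|x0 - z| ^+ 2) =
   (fun x0 => 3 / 2 - `|x0 - z| + `|x0 - z| * `|x0 - z|).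
  by apply: funext => y; rewrite expr2.
have hn : (fun y : R => `|y - z|) @ x --> `|x - z|.
  by apply: cvg_norm; apply: cvgB; [exact: cvg_id | exact: cvg_cst].
apply: cvgD.
  apply: cvgB; [exact: cvg_cst | exact: hn].
by apply: cvgM; exact: hn.
Qed.

Lemma Kq_int z : 0 <= z <= 1 ->
  \int[lebesgue_measure]_(x in `[0, 1]) Kq x z = 4/3.
Proof.
move=> /andP[z0 z1].
pose u : R -> R := (id - cst z).
pose B : R -> R := fun y => (y - z) * `|y - z|.
pose F : R -> R := ((3/2 : R) \*: id) - ((1/2 : R) \*: B) + ((1/3 : R) \*: (u ^+ 3)).
have dF : forall x, is_derive x 1 F (Kq x z).
  move=> x.
  have d1 : is_derive x 1 (@id R) 1 := is_derive_id x 1.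
  have d2 : is_derive x 1 (cst z) 0 := is_derive_cst z x 1.
  have du : is_derive x 1 u (1 - 0) := is_deriveB d1 d2.
  have du3 : is_derive x 1 (u ^+ 3) ((3%:R * u x ^+ 3.-1) *: (1 - 0)) := is_deriveX 3 du.
  have dB : is_derive x 1 B (2 * `|x - z|) := is_derive_absq z x.
  have dF := is_deriveD (is_deriveB (is_deriveZ (3/2 : R) d1) (is_deriveZ (1/2 : R) dB))
     (is_deriveZ (1/3 : R) du3).
  apply: (is_derive_eq dF).
  rewrite /Kq /u /= !fctE.
  change ((3/2) * 1 - (1/2) * (2 * `|x-z|) + (1/3) * ((3 * (x-z)^+2) * (1 - 0))
     = 3/2 - `|x-z| + `|x-z|^+2 :> R).
  rewrite real_normK ?num_real //.
  by field.
have cF : forall x, {for x, continuous F}.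
  by move=> x; apply: differentiable_continuous; apply/derivable1_diffP; case: (dF x).
rewrite /Rintegral (@continuous_FTC2 _ (fun x => Kq x z) F) //=.
- change ((3/2)*1 - (1/2)*((1 - z) * `|1 - z|) + (1/3)*((1 - z)^+3)
     - ((3/2)*0 - (1/2)*((0-z)* `|0-z|) + (1/3)*((0-z)^+3)) = 4/3 :> R).
  rewrite sub0r normrN (ger0_norm z0) (ger0_norm (_ : 0 <= 1 - z)); last by rewrite subr_ge0.
  by field.
- by apply: continuous_in_subspaceT => x _; exact: Kq_cont.
- split.
  + by move=> x _; case: (dF x).
  + by apply: cvg_at_right_filter; exact: cF.
  + by apply: cvg_at_left_filter; exact: cF.
- by move=> x _; rewrite derive1E; case: (dF x).
Qed.
End Int.

Section Fact.
Variables (R : realType) (p : nat) (s : nat -> nat).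

Lemma iterint_prod (phi : nat -> R -> R) (a : nat -> R) m :
  (forall k c, (k < m)%N -> avg p s k (fun x => c * phi k x) = c * a k) ->
  forall (G : (nat -> R) -> R) t,
  (forall z z', (forall k, (m <= k)%N -> z k = z' k) -> G z = G z') ->
  iterint p s m (fun z => G z * \prod_(k < m) phi k (z k)) t = G t * \prod_(k < m) a k.
Proof.
elim: m => [|m IH] hA G t hG.
  by rewrite /= !big_ord0.
rewrite /=.
have -> : (fun z => G z * \prod_(k < m.+1) phi k (z k)) =
    (fun z => (G z * phi m (z m)) * \prod_(k < m) phi k (z k)).
  by apply: funext => z; rewrite big_ord_recr /= mulrAC mulrA.
have e : forall x, iterint p s m (fun z => (G z * phi m (z m)) * \prod_(k < m) phi k (z k)) (upd t m x)
    = (G t * \prod_(k < m) a k) * phi m x.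
  move=> x; rewrite IH.
  - rewrite /upd eqxx (hG _ t); first by rewrite mulrAC.
    by move=> k mk; rewrite ifN // neq_ltn mk orbT.
  - by move=> k c km; apply: hA; apply: ltnW.
  - move=> z z' hz; rewrite (hz m (leqnn m)) (hG z z') //.
    by move=> k mk; apply: hz; apply: ltnW.
rewrite (_ : (fun x => _) = (fun x => (G t * \prod_(k < m) a k) * phi m x)); last first.
  by apply: funext => x; apply: e.
by rewrite hA // big_ord_recr /= mulrA.
Qed.
End Fact.

Section Comb.
Variable R : realType.

Lemma regroup n (a : 'I_n -> nat) S c (F : nat -> R) :
  (forall i, (a i < S)%N) -> (forall v, (v < S)%N -> #|[set i | a i == v]| = c) ->
  \sum_i F (a i) = \sum_(v < S) c%:R * F v.
Proof.
move=> ha hc.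
rewrite (partition_big (fun i => Ordinal (ha i)) predT) //=.
apply: eq_bigr => v _.
rewrite (eq_bigr (fun _ => F v)); last by move=> i /eqP <-.
rewrite sumr_const -(hc v (ltn_ord v)) mulr_natl; congr (_ *+ _).
apply: eq_card => i; apply/idP/idP => H. by apply: mem_set. by move/set_mem: H.
Qed.

Lemma offdiag n (a : 'I_n -> nat) S c (g : nat -> nat -> R) L :
  (forall i, (a i < S)%N) -> (forall v, (v < S)%N -> #|[set i | a i == v]| = c) ->
  (forall v, g v v = L) ->
  \sum_i \sum_(j | j != i) g (a i) (a j) =
    c%:R ^+ 2 * \sum_(v < S) \sum_(w < S) g v w - n%:R * L.
Proof.
move=> ha hc hg.
have e1 : forall i, \sum_(j | j != i) g (a i) (a j) = \sum_j g (a i) (a j) - L.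
  by move=> i; rewrite [in RHS](bigD1 i) //= hg addrC addrK.
rewrite (eq_bigr _ (fun i _ => e1 i)) sumrB sumr_const card_ord.
congr (_ - _); last by rewrite mulr_natl.
rewrite (eq_bigr (fun i => \sum_(w < S) c%:R * g (a i) w)); last first.
  by move=> i _; rewrite (regroup (fun w => g (a i) w) ha hc).
rewrite (regroup (fun v => \sum_(w < S) c%:R * g v w) ha hc).
rewrite mulr_sumr; apply: eq_bigr => v _.
by rewrite mulr_sumr mulr_sumr; apply: eq_bigr => w _; rewrite mulrA expr2.
Qed.

Lemma sum_ifeq S (x y : R) :
  \sum_(v < S) \sum_(w < S) (if v == w :> nat then x else y) = S%:R * (x + (S.-1)%:R * y).
Proof.
rewrite (eq_bigr (fun _ => x + (S.-1)%:R * y)) ?sumr_const ?card_ord ?mulr_natl //.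
move=> v _; rewrite (bigD1 v) //= eqxx; congr (_ + _).
rewrite (eq_bigr (fun _ => y)); last by move=> w hw; rewrite ifN // eq_sym; exact: hw.
rewrite sumr_const; congr (_ *+ _).
by rewrite cardC1 card_ord.
Qed.


Lemma mul2x (x : R) : 2 * x = x + x. Proof. by ring. Qed.

Lemma modval S v w : (v < S)%N -> (w < S)%N ->
  ((v + S - w) %% S = if (w <= v)%N then v - w else v + S - w)%N.
Proof.
move=> vS wS; case: leqP => wv.
  have -> : (v + S - w = (v - w) + S)%N by lia.
  by rewrite modnDr modn_small //; lia.
by rewrite modn_small //; lia.
Qed.

Lemma sum_circ S (H : nat -> R) v : (v < S)%N ->
  \sum_(w < S) H ((v + S - w) %% S)%N = \sum_(r < S) H r.
Proof.
move=> vS.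
have S0 : (0 < S)%N by lia.
pose f (w : 'I_S) : 'I_S := Ordinal (ltn_pmod (v + S - w) S0).
have finj : injective f.
  move=> w1 w2 /(congr1 val) /=.
  rewrite !modval // => e; apply: val_inj => /=.
  have := ltn_ord w1; have := ltn_ord w2; move: e; case: (leqP w1 v) => h1; case: (leqP w2 v) => h2 /= *; lia.
by rewrite [RHS](reindex_inj finj).
Qed.

Lemma split_odd m (f : nat -> R) :
  (forall r, (r <= m.*2.+1)%N -> f r = f (m.*2.+1 - r)%N) ->
  \sum_(r < m.*2.+1) f r = f 0%N + 2 * \sum_(1 <= i < m.+1) f i.
Proof.
move=> hf.
rewrite -(big_mkord xpredT f) big_ltn // (big_cat_nat _ (n := m.+1)) //=; last lia.
rewrite mul2x; congr (_ + _); congr (_ + _).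
have e : \sum_(m.+1 <= i < m.*2.+1) f i = \sum_(1 <= i < m.+1) f (i + m)%N.
  rewrite -[in LHS](add1n m) big_addn.
  by rewrite (_ : (m.*2.+1 - m = m.+1)%N) //; lia.
rewrite e [RHS]big_nat_rev /=.
apply: eq_big_nat => i /andP[i1 i2]; rewrite hf; last lia.
congr f; lia.
Qed.

Lemma split_even m (f : nat -> R) : (0 < m)%N ->
  (forall r, (r <= m.*2)%N -> f r = f (m.*2 - r)%N) ->
  \sum_(r < m.*2) f r = f 0%N + 2 * \sum_(1 <= i < m) f i + f m.
Proof.
move=> m0 hf.
rewrite -(big_mkord xpredT f) big_ltn; last lia.
rewrite (big_cat_nat _ (n := m)) //=; last lia.
rewrite (big_ltn (m := m)) /=; last lia.
rewrite mulr2n mulrDl mul1r -!addrA; congr (_ + _); congr (_ + _).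
rewrite addrC; congr (_ + _).
rewrite -{1}(add1n m) big_addn.
have -> : (m.*2 - m = m)%N by lia.
rewrite [RHS]big_nat_rev /=.
apply: eq_big_nat => i /andP[i1 i2]; rewrite hf; last lia.
congr f; lia.
Qed.

Lemma amgm n (P : 'I_n -> 'I_n -> bool) (y : 'I_n -> 'I_n -> R) :
  0 < \sum_i \sum_(j | P i j) (1 : R) ->
  (\sum_i \sum_(j | P i j) (1 : R)) *
     expR ((\sum_i \sum_(j | P i j) y i j) / \sum_i \sum_(j | P i j) (1 : R))
  <= \sum_i \sum_(j | P i j) expR (y i j).
Proof.
set N := \sum_i _; set Y := \sum_i _ => N0.
set mu := Y / N.
have h1 : forall i j, expR mu * (1 + (y i j - mu)) <= expR (y i j).
  move=> i j; rewrite -{2}(subrK mu (y i j)) expRD mulrC.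
  by rewrite ler_wpM2r ?expR_ge0 // expR_ge1Dx.
have h2 : \sum_i \sum_(j | P i j) expR mu * (1 + (y i j - mu)) = N * expR mu.
  rewrite (eq_bigr (fun i => expR mu * (\sum_(j | P i j) 1 + \sum_(j | P i j) y i j
       - mu * \sum_(j | P i j) 1))); last first.
    move=> i _; rewrite -mulr_sumr; congr (_ * _).
    rewrite big_split /= sumrB.
    have -> : \sum_(j | P i j) mu = mu * \sum_(j | P i j) 1 by rewrite mulr_sumr; apply: eq_bigr => j _; rewrite mulr1.
    by ring.
  rewrite -mulr_sumr !big_split /= sumrN -mulr_sumr -/N -/Y.
  have -> : Y = mu * N by rewrite /mu mulrVK // unitfE gt_eqF.
  by ring.
rewrite -h2; apply: ler_sum => i _; apply: ler_sum => j _; exact: h1.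
Qed.

Lemma ln_prod (I : finType) (P : pred I) (F : I -> R) :
  (forall i, P i -> 0 < F i) -> ln (\prod_(i | P i) F i) = \sum_(i | P i) ln (F i).
Proof.
move=> hF.
suff : 0 < \prod_(i | P i) F i /\ ln (\prod_(i | P i) F i) = \sum_(i | P i) ln (F i) by case.
elim/big_rec2: _ => [|i x y Pi [x0 <-]]; first by rewrite ln1 ltr01.
have Fi := hF i Pi.
by split; [rewrite mulr_gt0 | rewrite lnM // posrE].
Qed.
End Comb.

Section Main.
Variables (R : realType) (n p q : nat) (s : nat -> nat) (D : 'M[nat]_(n, p + q)).
Hypotheses (n1 : (1 < n)%N) (hU : Utype s D).

Local Notation KK := (@Kk R p).

Lemma Dlt i (k : 'I_(p + q)) : (D i k < s k)%N.
Proof. exact: (hU k).1. Qed.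

Lemma spos (k : 'I_(p + q)) : (0 < s k)%N.
Proof. have i : 'I_n by exists 0%N; lia. by have := Dlt i k; lia. Qed.

Definition cnt (k : 'I_(p + q)) := #|[set i : 'I_n | D i k == 0%N]|.

Lemma cntE (k : 'I_(p + q)) v : (v < s k)%N -> #|[set i : 'I_n | D i k == v]| = cnt k.
Proof. by move=> vs; apply: (hU k).2 => //; exact: spos. Qed.

Lemma n_eq (k : 'I_(p + q)) : n%:R = (cnt k)%:R * (s k)%:R :> R.
Proof.
have := regroup (fun _ => (1 : R)) (fun i => Dlt i k) (cntE (k := k)).
rewrite sumr_const card_ord => ->.
by rewrite sumr_const card_ord mulr1 mulr_natr.
Qed.

Lemma xptE i (k : 'I_(p + q)) : xpt R s D i k =
  if (k < p)%N then (D i k)%:R else ((D i k)%:R *+ 2 + 1) / ((s k)%:R *+ 2).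
Proof.
rewrite /xpt insubT /=; first exact: ltn_ord.
by move=> h; rewrite (_ : Sub (k : nat) h = k :> 'I_(p + q)) //; apply: val_inj.
Qed.

Lemma KK_pos k a b : 0 < KK k a b.
Proof.
rewrite /Kk; case: ifP => _; first by case: ifP.
have : 0 <= (`|a - b| - 1/2) ^+ 2 by rewrite sqr_ge0.
nra.
Qed.

Lemma KK_diag k a : KK k a a = 3/2.
Proof. by rewrite /Kk eqxx subrr normr0 expr0n /= subr0 addr0; case: ifP. Qed.


Lemma avgZ_qual k c (f : R -> R) : (k < p)%N -> avg p s k (fun x => c * f x) = c * avg p s k f.
Proof. by rewrite /avg => ->; rewrite -mulr_sumr mulrCA. Qed.

Lemma avgZ_quan k c (f : R -> R) : (p <= k)%N -> continuous f ->
  avg p s k (fun x => c * f x) = c * avg p s k f.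
Proof.
move=> pk cf; have kp : (k < p)%N = false by rewrite ltnNge pk.
rewrite /avg kp.
apply: RintegralZl => //.
apply: continuous_compact_integrable; first exact: segment_compact.
by apply: continuous_in_subspaceT => x _; exact: cf.
Qed.

Lemma KK_quan k a b : (p <= k)%N -> KK k a b = Kq a b.
Proof. by move=> pk; rewrite /Kk ltnNge pk. Qed.

Lemma KK_qual k (v w : nat) : (k < p)%N -> KK k v%:R w%:R = if v == w then 3/2 else 5/4.
Proof. by move=> kp; rewrite /Kk kp eqr_nat. Qed.

Lemma row_sum S v (A B : R) : (v < S)%N ->
  \sum_(x < S) (if v == x :> nat then A else B) = A + (S.-1)%:R * B.
Proof.
move=> vS; rewrite (bigD1 (Ordinal vS)) //= eqxx; congr (_ + _).
rewrite (eq_bigr (fun _ => B)); last first.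
  by move=> w hw; rewrite ifN // eq_sym; exact: hw.
by rewrite sumr_const cardC1 card_ord mulr_natl.
Qed.

Definition a0 k : R := if (k < p)%N then ((s k)%:R *+ 5 + 1) / ((s k)%:R *+ 4) else 4/3.

Lemma qual_val k S v : (k < p)%N -> (0 < S)%N -> (v < S)%N ->
  (S%:R)^-1 * \sum_(x < S) KK k v%:R x%:R = (S%:R *+ 5 + 1) / (S%:R *+ 4).
Proof.
move=> kp S0 vS.
rewrite (eq_bigr (fun x : 'I_S => if v == x :> nat then 3/2 else 5/4)); last first.
  by move=> x _; rewrite KK_qual.
rewrite row_sum //.
have S0' : (S%:R : R) != 0 by rewrite pnatr_eq0 -lt0n.
rewrite -(prednK S0) in S0' *; rewrite -natr1.
by field; rewrite natr1.
Qed.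

Lemma inner t : intF p q s (fun z => Kern p q t z) =
  \prod_(k < p + q) avg p s k (fun x => KK k (t k) x).
Proof.
rewrite /intF.
have -> : (fun z => Kern p q t z) = (fun z => 1 * \prod_(k < p + q) KK k (t k) (z k)).
  by apply: funext => z; rewrite mul1r.
rewrite (@iterint_prod R p s (fun k x => KK k (t k) x) (fun k => avg p s k (fun x => KK k (t k) x))) ?mul1r //.
move=> k c _; case: (ltnP k p) => kp; first exact: avgZ_qual.
apply: avgZ_quan => //.
have -> : KK k (t k) = (fun x => Kq x (t k)).
  by apply: funext => x; rewrite KK_quan // /Kq distrC.
exact: Kq_cont.
Qed.


Lemma sum_const_ord m (x : R) : \sum_(i < m) x = m%:R * x.
Proof. by rewrite sumr_const card_ord mulr_natl. Qed.

Lemma int_cst (r : R) : \int[lebesgue_measure]_(x in `[0, 1]) r = r.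
Proof.
rewrite Rintegral_cst //= lebesgue_measure_itv /= lte_fin ltr01 oppr0 adde0 /=.
by rewrite mulr1.
Qed.

Lemma psi_quan k x : (p <= k)%N -> 0 <= x <= 1 -> avg p s k (fun z => KK k x z) = 4/3.
Proof.
move=> pk x01; have kp : (k < p)%N = false by rewrite ltnNge pk.
rewrite /avg kp -(Kq_int x01); apply: eq_Rintegral => z _.
by rewrite KK_quan // /Kq distrC.
Qed.

Lemma first_term : intF p q s (fun t => intF p q s (fun z => Kern p q t z)) =
  \prod_(k < p + q) a0 k.
Proof.
have -> : (fun t => intF p q s (fun z => Kern p q t z)) =
   (fun t => 1 * \prod_(k < p + q) avg p s k (fun x => KK k (t k) x)).
  by apply: funext => t; rewrite inner mul1r.
rewrite /intF (@iterint_prod R p s (fun k y => avg p s k (fun x => KK k y x)) a0) ?mul1r //.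
move=> k c hk; case: (ltnP k p) => kp.
  rewrite /avg kp /a0 kp.
  have s0 := spos (Ordinal hk).
  rewrite (eq_bigr (fun _ => c * (((s k)%:R *+ 5 + 1) / ((s k)%:R *+ 4)))); last first.
    by move=> v _; rewrite (qual_val kp s0 (ltn_ord v)).
  rewrite sum_const_ord mulKf //.
  by rewrite pnatr_eq0 -lt0n.
rewrite /avg (_ : (k < p)%N = false) ?ltnNge ?kp // /a0 (_ : (k < p)%N = false) ?ltnNge ?kp //.
rewrite -[RHS]int_cst; apply: eq_Rintegral => x; rewrite inE /= in_itv /= => x01.
by rewrite -(psi_quan kp x01) /avg ltnNge kp.
Qed.


Lemma xq01 (a S : nat) : (a < S)%N ->
  0 <= ((a%:R *+ 2 + 1) / (S%:R *+ 2) : R) <= 1.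
Proof.
move=> aS.
have h : (a%:R + 1 <= S%:R :> R) by rewrite natr1 ler_nat.
have h0 : (0 <= a%:R :> R) by rewrite ler0n.
rewrite !mulr2n; apply/andP; split.
  by rewrite divr_ge0 //; lra.
by rewrite ler_pdivrMr ?mul1r; lra.
Qed.

Lemma second_term i : intF p q s (fun t => Kern p q t (xpt R s D i)) =
  \prod_(k < p + q) a0 k.
Proof.
have -> : (fun t => Kern p q t (xpt R s D i)) =
    (fun t => 1 * \prod_(k < p + q) KK k (t k) (xpt R s D i k)).
  by apply: funext => t; rewrite mul1r.
rewrite /intF (@iterint_prod R p s (fun k y => KK k y (xpt R s D i k)) a0) ?mul1r //.
move=> k c hk; pose kk := Ordinal hk.
have xe : xpt R s D i k = xpt R s D i kk by [].
have s0 : (0 < s k)%N := spos kk.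
have Dl : (D i kk < s k)%N := Dlt i kk.
case: (ltnP k p) => kp.
  rewrite /avg kp /a0 kp xe xptE /= kp -mulr_sumr mulrCA; congr (_ * _).
  rewrite -(qual_val kp s0 Dl); congr (_ * _); apply: eq_bigr => x _.
  by rewrite !KK_qual // eq_sym.
rewrite avgZ_quan //; last first.
  have -> : (fun y => KK k y (xpt R s D i k)) = (fun y => Kq y (xpt R s D i k)).
    by apply: funext => y; rewrite KK_quan.
  exact: Kq_cont.
have kp' : (k < p)%N = false by rewrite ltnNge kp.
rewrite /a0 /avg kp'; congr (_ * _).
rewrite xe xptE /= kp' -(Kq_int (xq01 Dl)); apply: eq_Rintegral => y _.
by rewrite KK_quan.
Qed.


Definition hh (S r : nat) : R := 3/2 - r%:R * (S%:R - r%:R) / (S%:R ^+ 2).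
Definition Xv k (v : nat) : R :=
  if (k < p)%N then v%:R else (v%:R *+ 2 + 1) / ((s k)%:R *+ 2).

Lemma Kq_hh k v w : (p <= k)%N -> (v < s k)%N -> (w < s k)%N ->
  Kq (Xv k v) (Xv k w) = hh (s k) ((v + s k - w) %% s k).
Proof.
move=> pk vS wS; have kp : (k < p)%N = false by rewrite ltnNge pk.
rewrite /Kq /Xv /hh kp modval //.
set S := s k.
have S0 : (0 < S%:R :> R) by rewrite ltr0n; lia.
have -> : (v%:R *+ 2 + 1) / (S%:R *+ 2) - (w%:R *+ 2 + 1) / (S%:R *+ 2)
   = (v%:R - w%:R) / S%:R :> R.
  by rewrite !mulr2n; field; rewrite !gt_eqF ?addr_gt0.
rewrite real_normK ?num_real // normrM (gtr0_norm (_ : 0 < S%:R^-1)) ?invr_gt0 //.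
case: leqP => wv.
  rewrite natrB // ger0_norm; last by rewrite subr_ge0 ler_nat.
  by field; rewrite gt_eqF.
rewrite natrB; last lia.
rewrite natrD ltr0_norm; last by rewrite subr_lt0 ltr_nat.
by field; rewrite gt_eqF.
Qed.

Lemma hh_sym S r : (r <= S)%N -> hh S r = hh S (S - r).
Proof. by move=> rS; rewrite /hh natrB //; ring. Qed.

Lemma hh_pos S r : (0 < S)%N -> (r <= S)%N -> 0 < hh S r.
Proof.
move=> S0 rS; rewrite /hh.
have h1 : (0 < S%:R :> R) by rewrite ltr0n.
have h2 : (0 <= r%:R :> R) by rewrite ler0n.
have h3 : (r%:R <= S%:R :> R) by rewrite ler_nat.
have h4 : r%:R * (S%:R - r%:R) <= S%:R ^+ 2 :> R by nra.
rewrite subr_gt0 ltr_pdivrMr ?exprn_gt0 //; nra.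
Qed.


Lemma colsum_eq (kk : 'I_(p + q)) :
  \sum_i \sum_(j | j != i) ln (KK kk (xpt R s D i kk) (xpt R s D j kk)) =
  (cnt kk)%:R ^+ 2 * \sum_(v < s kk) \sum_(w < s kk) ln (KK kk (Xv kk v) (Xv kk w))
  - n%:R * ln (3/2).
Proof.
have e : forall i, xpt R s D i kk = Xv kk (D i kk) by move=> i; rewrite xptE.
under eq_bigr do under eq_bigr do rewrite !e.
apply: (@offdiag R n (fun i => D i kk) (s kk) (cnt kk)
   (fun v w => ln (KK kk (Xv kk v) (Xv kk w))) (ln (3/2))).
- by move=> i; exact: Dlt.
- exact: cntE.
- by move=> v; rewrite KK_diag.
Qed.

Lemma qual_double (kk : 'I_(p + q)) : (kk < p)%N ->
  \sum_(v < s kk) \sum_(w < s kk) ln (KK kk (Xv kk v) (Xv kk w)) =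
  (s kk)%:R * (ln (3/2) + ((s kk).-1)%:R * ln (5/4)).
Proof.
move=> kp; rewrite -sum_ifeq; apply: eq_bigr => v _; apply: eq_bigr => w _.
by rewrite /Xv kp KK_qual // (fun_if (@ln R)).
Qed.

Lemma quan_double (kk : 'I_(p + q)) : (p <= kk)%N ->
  \sum_(v < s kk) \sum_(w < s kk) ln (KK kk (Xv kk v) (Xv kk w)) =
  (s kk)%:R * \sum_(r < s kk) ln (hh (s kk) r).
Proof.
move=> pk; rewrite -sum_const_ord; apply: eq_bigr => v _.
rewrite -(sum_circ (fun r => ln (hh (s kk) r)) (ltn_ord v)).
by apply: eq_bigr => w _; rewrite KK_quan // Kq_hh.
Qed.

Lemma hh0 S : hh S 0 = 3/2.
Proof. by rewrite /hh !mul0r subr0. Qed.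

Lemma hh_half m : (0 < m)%N -> hh m.*2 m = 5/4.
Proof.
move=> m0; rewrite /hh -mul2n natrM.
have : (m%:R : R) != 0 by rewrite pnatr_eq0 -lt0n.
by move=> h; field.
Qed.

Lemma sum_hh_odd S : odd S ->
  \sum_(r < S) ln (hh S r) = ln (3/2) + 2 * \sum_(1 <= i < (S.-1 %/ 2).+1) ln (hh S i).
Proof.
move=> oS.
have hm : S = (S.-1 %/ 2).*2.+1.
  move: (odd_double_half S); rewrite oS add1n => eS.
  by rewrite -{2}eS /= divn2 doubleK.
have := @split_odd R (S.-1 %/ 2) (fun r => ln (hh S r)).
rewrite -hm hh0; apply => r rS; congr ln; exact: hh_sym.
Qed.

Lemma sum_hh_even S : (0 < S)%N -> ~~ odd S ->
  \sum_(r < S) ln (hh S r) = ln (3/2) + 2 * \sum_(1 <= i < S %/ 2) ln (hh S i) + ln (5/4).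
Proof.
move=> S0 eS.
have hm : S = (S %/ 2).*2.
  move: (odd_double_half S); rewrite (negbTE eS) add0n => e.
  by rewrite divn2.
have m0 : (0 < S %/ 2)%N by move: S0; rewrite {1}hm double_gt0.
have := @split_even R (S %/ 2) (fun r => ln (hh S r)) m0.
have hhm : hh S (S %/ 2) = 5/4 by rewrite {1}hm hh_half.
rewrite -hm hh0 hhm; apply => r rS; congr ln; exact: hh_sym.
Qed.



Lemma alg1 (c S L3 L5 : R) : S != 0 -> c != 0 -> c * S - 1 != 0 ->
  (c ^+ 2 * (S * (L3 + (S - 1) * L5)) - c * S * L3) / (c * S * (c * S - 1)) =
  L5 + (c * S - S) / (S * (c * S - 1)) * (L3 - L5).
Proof. by move=> h1 h2 h3; field; rewrite h1 h2 h3. Qed.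

Lemma alg2 (c S L3 W : R) : S != 0 -> c != 0 -> c * S - 1 != 0 ->
  (c ^+ 2 * (S * (L3 + 2 * W)) - c * S * L3) / (c * S * (c * S - 1)) =
  (c * S - S) / (S * (c * S - 1)) * L3 + (2 * (c * S)) / (S * (c * S - 1)) * W.
Proof. by move=> h1 h2 h3; field; rewrite h1 h2 h3. Qed.

Lemma alg3 (c S L3 L5 W : R) : S != 0 -> c != 0 -> c * S - 1 != 0 ->
  (c ^+ 2 * (S * (L3 + 2 * W + L5)) - c * S * L3) / (c * S * (c * S - 1)) =
  (c * S - S) / (S * (c * S - 1)) * L3 + (c * S) / (S * (c * S - 1)) * L5
  + (2 * (c * S)) / (S * (c * S - 1)) * W.
Proof. by move=> h1 h2 h3; field; rewrite h1 h2 h3. Qed.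


Variable t : nat.
Hypotheses (hpt : (p <= t <= p + q)%N)
  (hodd : forall k, (p <= k < t)%N -> odd (s k))
  (heven : forall k, (t <= k < p + q)%N -> ~~ odd (s k)).

Definition rr k : R := (n%:R - (s k)%:R) / ((s k)%:R * (n.-1)%:R).
Definition bb k : R := n%:R / ((s k)%:R * (n.-1)%:R).
Definition ee k : R := (2 * n)%:R / ((s k)%:R * (n.-1)%:R).
Definition hk k (i : nat) : R :=
    3 / 2 - (i *+ 2)%:R * ((s k)%:R *+ 2 - (i *+ 2)%:R)
            / (((s k)%:R ^+ 2) *+ 4).

Definition col k : R :=
  if (k < p)%N then ln (5/4) + rr k * ln (6/5)
  else if (k < t)%N then
    rr k * ln (3/2) + \sum_(1 <= i < ((s k).-1 %/ 2).+1) ee k * ln (hk k i)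
  else rr k * ln (3/2) + bb k * ln (5/4) + \sum_(1 <= i < s k %/ 2) ee k * ln (hk k i).

Lemma hk_hh k i : (0 < s k)%N -> hk k i = hh (s k) i.
Proof.
move=> s0; rewrite /hk /hh natrD !mulr2n.
have : ((s k)%:R : R) != 0 by rewrite pnatr_eq0 -lt0n.
by move=> h; field; rewrite h.
Qed.

Lemma ln65 : ln (6/5 : R) = ln (3/2) - ln (5/4).
Proof.
by rewrite -ln_div ?posrE //; congr ln; field.
Qed.

Lemma col_eq (kk : 'I_(p + q)) :
  (\sum_i \sum_(j | j != i) ln (KK kk (xpt R s D i kk) (xpt R s D j kk)))
    / (n%:R * (n.-1)%:R) = col kk.
Proof.
have s0 := spos kk.
have S0 : ((s kk)%:R : R) != 0 by rewrite pnatr_eq0 -lt0n.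
have nR := n_eq kk.
have n0 : (n%:R : R) != 0 by rewrite pnatr_eq0; lia.
have c0 : ((cnt kk)%:R : R) != 0 by move: n0; rewrite nR mulf_eq0 negb_or => /andP[].
have npred : ((n.-1)%:R : R) = n%:R - 1 by rewrite -subn1 natrB //; lia.
have n10 : ((cnt kk)%:R * (s kk)%:R - 1 : R) != 0.
  by rewrite -nR -npred pnatr_eq0; lia.
rewrite colsum_eq /col /rr /bb /ee npred natrM nR.
case: (ltnP kk p) => kp.
  rewrite qual_double // ln65 -(alg1 _ _ S0 c0 n10); congr (_ / _); congr (_ - _).
  by rewrite -subn1 natrB.
case: (ltnP kk t) => kt.
  rewrite quan_double // sum_hh_odd; last by apply: hodd; rewrite kp kt.
  rewrite -mulr_sumr.
  have eh : \sum_(1 <= i < ((s kk).-1 %/ 2).+1) ln (hk kk i) =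
     \sum_(1 <= i < ((s kk).-1 %/ 2).+1) ln (hh (s kk) i).
    by apply: eq_big_nat => i _; rewrite hk_hh.
  by rewrite eh -(@alg2 _ _ _ _ S0 c0 n10).
rewrite quan_double // sum_hh_even //; last by apply: heven; rewrite kt ltn_ord.
rewrite -mulr_sumr.
have eh : \sum_(1 <= i < s kk %/ 2) ln (hk kk i) = \sum_(1 <= i < s kk %/ 2) ln (hh (s kk) i).
  by apply: eq_big_nat => i _; rewrite hk_hh.
by rewrite eh -(@alg3 _ _ _ _ _ S0 c0 n10).
Qed.


Lemma powRE' (a x : R) : a != 0 -> a `^ x = expR (x * ln a).
Proof. by move=> a0; rewrite /powR (negbTE a0). Qed.

Lemma spos_nat k : (k < p + q)%N -> (0 < s k)%N.
Proof. by move=> hk; exact: (spos (Ordinal hk)). Qed.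

Lemma prod_exp (m1 m2 : nat) (F : nat -> nat) :
  (forall k, (m1 <= k < m2)%N -> (k < p + q)%N) ->
  (forall k, (m1 <= k < m2)%N -> (F k <= s k)%N) ->
  \prod_(m1 <= k < m2) \prod_(1 <= i < F k) (hk k i `^ ee k) =
  expR (\sum_(m1 <= k < m2) \sum_(1 <= i < F k) ee k * ln (hk k i)).
Proof.
move=> hq hF; rewrite expR_sum; apply: eq_big_nat => k hk'.
rewrite expR_sum; apply: eq_big_nat => i /andP[i1 i2].
have s0 := spos_nat (hq k hk').
rewrite powRE' // hk_hh // gt_eqF // hh_pos //.
by have := hF k hk'; lia.
Qed.

Lemma T1 :
  (5/4) ^+ p * ((6/5) `^ (\sum_(0 <= k < p) rr k)) * ((3/2) `^ (\sum_(p <= k < p + q) rr k))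
  * ((5/4) `^ (\sum_(t <= k < p + q) bb k))
  * (\prod_(p <= k < t) \prod_(1 <= i < ((s k).-1 %/ 2).+1) (hk k i `^ ee k))
  * (\prod_(t <= k < p + q) \prod_(1 <= i < (s k %/ 2)) (hk k i `^ ee k))
  = expR (\sum_(0 <= k < p + q) col k).
Proof.
have /andP[pt tq] := hpt.
have hq1 : forall k, (p <= k < t)%N -> (k < p + q)%N by move=> k; lia.
have hq2 : forall k, (t <= k < p + q)%N -> (k < p + q)%N by move=> k; lia.
have hF1 : forall k, (p <= k < t)%N -> (((s k).-1 %/ 2).+1 <= s k)%N.
  move=> k hk; have := leq_div (s k).-1 2.
  have := spos_nat (hq1 k hk); lia.
have hF2 : forall k, (t <= k < p + q)%N -> (s k %/ 2 <= s k)%N.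
  by move=> k _; exact: leq_div.
rewrite !powRE' // (prod_exp hq1 hF1) (prod_exp hq2 hF2).
have e54 : (5/4 : R) ^+ p = expR (p%:R * ln (5/4)) by rewrite expRM_natl lnK // posrE.
rewrite e54.
rewrite -!expRD; congr expR.
have s1 : \sum_(0 <= k < p + q) col k =
   \sum_(0 <= k < p) col k + \sum_(p <= k < t) col k + \sum_(t <= k < p + q) col k.
  by rewrite -addrA -big_cat_nat // -big_cat_nat //; lia.
have s2 : \sum_(p <= k < p + q) rr k = \sum_(p <= k < t) rr k + \sum_(t <= k < p + q) rr k.
  by rewrite -big_cat_nat.
have c1 : \sum_(0 <= k < p) col k = p%:R * ln (5/4) + (\sum_(0 <= k < p) rr k) * ln (6/5).
  rewrite (eq_big_nat _ _ (F2 := fun k => ln (5/4) + rr k * ln (6/5))); last first.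
    by move=> k /andP[_ h]; rewrite /col h.
  by rewrite big_split /= sumr_const_nat subn0 mulr_suml -[_ *+ p]mulr_natl.
have c2 : \sum_(p <= k < t) col k = (\sum_(p <= k < t) rr k) * ln (3/2) +
     \sum_(p <= k < t) \sum_(1 <= i < ((s k).-1 %/ 2).+1) ee k * ln (hk k i).
  rewrite (eq_big_nat _ _ (F2 := fun k => rr k * ln (3/2) +
      \sum_(1 <= i < ((s k).-1 %/ 2).+1) ee k * ln (hk k i))); last first.
    by move=> k /andP[h1 h2]; rewrite /col h2 ltnNge h1.
  by rewrite big_split /= mulr_suml.
have c3 : \sum_(t <= k < p + q) col k = (\sum_(t <= k < p + q) rr k) * ln (3/2) +
     (\sum_(t <= k < p + q) bb k) * ln (5/4) +
     \sum_(t <= k < p + q) \sum_(1 <= i < s k %/ 2) ee k * ln (hk k i).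
  rewrite (eq_big_nat _ _ (F2 := fun k => rr k * ln (3/2) + bb k * ln (5/4) +
      \sum_(1 <= i < s k %/ 2) ee k * ln (hk k i))); last first.
    move=> k /andP[h1 h2]; rewrite /col ltnNge (leq_trans pt h1) /= ltnNge h1 //.
  by rewrite !big_split /= !mulr_suml.
rewrite s1 c1 c2 c3 s2; ring.
Qed.



Lemma Kern_diag i : Kern p q (xpt R s D i) (xpt R s D i) = (3/2) ^+ (p + q).
Proof.
rewrite /Kern (eq_bigr (fun _ => 3/2)); last by move=> k _; rewrite KK_diag.
by rewrite prodr_const card_ord.
Qed.

Lemma Kern_pos i j : 0 < Kern p q (xpt R s D i) (xpt R s D j).
Proof. by rewrite /Kern; apply: prodr_gt0 => k _; exact: KK_pos. Qed.

Lemma lnKern i j : ln (Kern p q (xpt R s D i) (xpt R s D j)) =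
  \sum_(k < p + q) ln (KK k (xpt R s D i k) (xpt R s D j k)).
Proof. by rewrite /Kern ln_prod // => k _; exact: KK_pos. Qed.

Lemma N_eq : \sum_(i < n) \sum_(j | j != i) (1 : R) = n%:R * (n.-1)%:R.
Proof.
rewrite (eq_bigr (fun _ => (n.-1)%:R)) ?sum_const_ord //.
move=> i _; rewrite sumr_const cardC1 card_ord.
by rewrite -[in RHS](mulr1 (n.-1)%:R) mulr_natl.
Qed.

Lemma Y_eq : (\sum_i \sum_(j | j != i) ln (Kern p q (xpt R s D i) (xpt R s D j)))
   / (n%:R * (n.-1)%:R) = \sum_(0 <= k < p + q) col k.
Proof.
under eq_bigr do under eq_bigr do rewrite lnKern.
under eq_bigr do rewrite exchange_big.
rewrite exchange_big /= mulr_suml big_mkord; apply: eq_bigr => k _.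
exact: col_eq.
Qed.


Lemma key :
  n%:R * (n.-1)%:R *
  ((5/4) ^+ p * ((6/5) `^ (\sum_(0 <= k < p) rr k)) * ((3/2) `^ (\sum_(p <= k < p + q) rr k))
  * ((5/4) `^ (\sum_(t <= k < p + q) bb k))
  * (\prod_(p <= k < t) \prod_(1 <= i < ((s k).-1 %/ 2).+1) (hk k i `^ ee k))
  * (\prod_(t <= k < p + q) \prod_(1 <= i < (s k %/ 2)) (hk k i `^ ee k)))
  <= \sum_i \sum_(j | j != i) Kern p q (xpt R s D i) (xpt R s D j).
Proof.
rewrite T1 -Y_eq -N_eq.
have N0 : 0 < \sum_(i < n) \sum_(j | j != i) (1 : R).
  by rewrite N_eq mulr_gt0 // ltr0n; lia.
apply: (le_trans (amgm _ N0)).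
apply: ler_sum => i _; apply: ler_sum => j _.
by rewrite lnK // posrE Kern_pos.
Qed.

Lemma prodP : \prod_(k < p + q) a0 k =
  (\prod_(k < p) (((s k)%:R *+ 5 + 1) / ((s k)%:R *+ 4))) * (4 / 3) ^+ q.
Proof.
rewrite big_split_ord /=; congr (_ * _).
  by apply: eq_bigr => k _; rewrite /a0 /= ltn_ord.
rewrite (eq_bigr (fun _ => 4/3)) ?prodr_const ?card_ord //.
by move=> k _; rewrite /a0 /= ltnNge leq_addr.
Qed.

Lemma final :
  - ((\prod_(k < p) (((s k)%:R *+ 5 + 1) / ((s k)%:R *+ 4))) * (4 / 3) ^+ q)
  + 1 / n%:R * (3 / 2) ^+ (p + q)
  + (n.-1)%:R / n%:R * (5 / 4) ^+ p
    * ((6 / 5) `^ (\sum_(0 <= k < p) rr k))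
    * ((3 / 2) `^ (\sum_(p <= k < p + q) rr k))
    * ((5 / 4) `^ (\sum_(t <= k < p + q) bb k))
    * (\prod_(p <= k < t) \prod_(1 <= i < ((s k).-1 %/ 2).+1) (hk k i `^ ee k))
    * (\prod_(t <= k < p + q) \prod_(1 <= i < (s k %/ 2)) (hk k i `^ ee k))
  <= @QQD2 R p q s n D.
Proof.
have K := key.
set T := (_ * _ * _ * _ * _ * _) in K.
set Sg := \sum_i _ in K.
set Pc := \prod_(k < p) _.
have n0 : (n%:R : R) != 0 by rewrite pnatr_eq0; lia.
have nn : 0 < (n%:R : R) by rewrite ltr0n; lia.
rewrite /QQD2 first_term (eq_bigr _ (fun i _ => second_term i)) sum_const_ord prodP -/Pc.
have e3 : \sum_(i < n) \sum_(j < n) Kern p q (xpt R s D i) (xpt R s D j) =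
    n%:R * (3/2) ^+ (p + q) + Sg.
  rewrite /Sg -sum_const_ord -big_split /=; apply: eq_bigr => i _.
  by rewrite (bigD1 i) //= Kern_diag.
rewrite e3.
have eT : (n.-1)%:R / n%:R * (5 / 4) ^+ p
    * ((6 / 5) `^ (\sum_(0 <= k < p) rr k))
    * ((3 / 2) `^ (\sum_(p <= k < p + q) rr k))
    * ((5 / 4) `^ (\sum_(t <= k < p + q) bb k))
    * (\prod_(p <= k < t) \prod_(1 <= i < ((s k).-1 %/ 2).+1) (hk k i `^ ee k))
    * (\prod_(t <= k < p + q) \prod_(1 <= i < (s k %/ 2)) (hk k i `^ ee k))
    = 1 / n%:R ^+ 2 * (n%:R * (n.-1)%:R * T).
  by rewrite /T; field.
rewrite eT.
have h1 : 1 / n%:R ^+ 2 * (n%:R * (n.-1)%:R * T) <= 1 / n%:R ^+ 2 * Sg.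
  by rewrite ler_wpM2l // divr_ge0 // exprn_ge0 // ltW.
have h2 : Pc * (4 / 3) ^+ q - 2 / n%:R * (n%:R * (Pc * (4 / 3) ^+ q)) +
    1 / n%:R ^+ 2 * (n%:R * (3 / 2) ^+ (p + q) + Sg) =
    - (Pc * (4 / 3) ^+ q) + 1 / n%:R * (3 / 2) ^+ (p + q) + 1 / n%:R ^+ 2 * Sg.
  by field.
rewrite h2; lra.
Qed.

End Main.

Theorem theorem3 (R : realType) (n p q t : nat) (s : nat -> nat)
  (D : 'M[nat]_(n, p + q)) :
  (1 < n)%N ->
  Utype s D ->
  (p <= t <= p + q)%N ->
  (forall k, (p <= k < t)%N -> odd (s k)) ->
  (forall k, (t <= k < p + q)%N -> ~~ odd (s k)) ->
  let e k : R := (2 * n)%:R / ((s k)%:R * (n.-1)%:R) in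
  let C : R := - ((\prod_(k < p) (((s k)%:R *+ 5 + 1) / ((s k)%:R *+ 4)))
                  * (4 / 3) ^+ q) in
  let h k (i : nat) : R :=
    3 / 2 - (i *+ 2)%:R * ((s k)%:R *+ 2 - (i *+ 2)%:R)
            / (((s k)%:R ^+ 2) *+ 4) in
  let LB1 : R :=
    C + 1 / n%:R * (3 / 2) ^+ (p + q)
    + (n.-1)%:R / n%:R * (5 / 4) ^+ p
      * ((6 / 5) `^ (\sum_(0 <= k < p)
            ((n%:R - (s k)%:R) / ((s k)%:R * (n.-1)%:R))))
      * ((3 / 2) `^ (\sum_(p <= k < p + q)
            ((n%:R - (s k)%:R) / ((s k)%:R * (n.-1)%:R))))
      * ((5 / 4) `^ (\sum_(t <= k < p + q)
            (n%:R / ((s k)%:R * (n.-1)%:R))))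
      * (\prod_(p <= k < t) \prod_(1 <= i < ((s k).-1 %/ 2).+1) (h k i `^ e k))
      * (\prod_(t <= k < p + q) \prod_(1 <= i < (s k %/ 2)) (h k i `^ e k)) in
  LB1 <= @QQD2 R p q s n D.
Proof.
intros n1 hU hpt hodd heven.
exact (@final R n p q s D n1 hU t hpt hodd heven).
Qed.
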